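(* For every $t\in(0,1)$, $$\lim_{k \to \infty} \sum_{n=0}^{\infty} (-1)^n B^n_k(t) = 0,$$ where the limit is over nonnegative integers $k$.
   Context: The Bernstein polynomials are $B^n_k(t) = \binom{n}{k} t^k (1-t)^{n-k}$ for integers $0\le k\le n$, and $B^n_k(t)=0$ for $n<k$. *)

(* Defs.v *)
From Stdlib Require Import Reals.
From Coquelicot Require Import Coquelicot.
Open Scope R_scope.

(* Bernstein polynomial B^n_k(t) = C(n,k) t^k (1-t)^(n-k) for k <= n, and 0 for n < k.
   (Stdlib's [C n k] is not 0 for n < k, hence the explicit case split.) *)
Definition bernstein (n k : nat) (t : R) : R :=
  if Nat.leb k n then Binomial.C n k * t ^ k * (1 - t) ^ (n - k) else 0.

(* Main.v *)
Require Import Defs.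
From Stdlib Require Import Reals Lia Lra.
From Coquelicot Require Import Coquelicot.
Open Scope R_scope.

Lemma bern_rec (n k : nat) (t : R) :
  bernstein (S n) (S k) t = t * bernstein n k t + (1 - t) * bernstein n (S k) t.
Proof.
  unfold bernstein.
  destruct (Nat.leb_spec k n) as [H|H].
  - replace (Nat.leb (S k) (S n)) with true by (symmetry; apply Nat.leb_le; lia).
    destruct (Nat.leb_spec (S k) n) as [H2|H2].
    + rewrite <- pascal by lia.
      replace (S n - S k)%nat with (n - k)%nat by lia.
      replace (n - k)%nat with (S (n - S k)) by lia. simpl. ring.
    + assert (k = n) by lia. subst.
      rewrite !Nat.sub_diag, !C_n_n. simpl. ring.
  - replace (Nat.leb (S k) (S n)) with false by (symmetry; apply Nat.leb_gt; lia).
    replace (Nat.leb (S k) n) with false by (symmetry; apply Nat.leb_gt; lia).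
    ring.
Qed.

Lemma bern_0S (k : nat) (t : R) : bernstein 0 (S k) t = 0.
Proof. reflexivity. Qed.

Lemma bern_n0 (n : nat) (t : R) : bernstein n 0 t = (1 - t) ^ n.
Proof. unfold bernstein. simpl. rewrite C_n_0, Nat.sub_0_r. ring. Qed.

Lemma bern_nonneg (t : R) : 0 < t < 1 -> forall n k, 0 <= bernstein n k t.
Proof.
  intros ht n. induction n as [|n IH]; intros k.
  - destruct k. rewrite bern_n0. simpl; lra. rewrite bern_0S; lra.
  - destruct k. rewrite bern_n0. apply pow_le; lra.
    rewrite bern_rec. specialize (IH k) as H1. specialize (IH (S k)) as H2.
    apply Rplus_le_le_0_compat; apply Rmult_le_pos; lra.
Qed.

Lemma sum_rec (a b c : nat -> R) (al be : R) :
  (forall n, c (S n) = al * b n + be * c n) ->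
  forall N, sum_n c (S N) = c O + al * sum_n b N + be * sum_n c N.
Proof.
  intros Hc N. induction N as [|N IH].
  - rewrite sum_Sn, !sum_O, Hc. unfold plus; simpl. ring.
  - rewrite sum_Sn, Hc, (sum_Sn b). rewrite IH at 1. rewrite (sum_Sn c N), Hc. unfold plus; simpl. ring.
Qed.

Lemma partial_bound (t : R) : 0 < t < 1 ->
  forall k N, sum_n (fun n => bernstein n k t) N <= / t.
Proof.
  intros ht k. induction k as [|k IH]; intros N.
  - assert (Hs : forall N, sum_n (fun n => bernstein n 0 t) N <= / t).
    { intros M. induction M as [|M IHM].
      + rewrite sum_O, bern_n0. simpl.
        apply Rmult_le_reg_l with t; [lra|]. rewrite Rinv_r by lra. nra.
      + rewrite (sum_rec (fun _ => 0) (fun _ => 0) (fun n => bernstein n 0 t) 0 (1 - t)).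
        * rewrite bern_n0. simpl.
          assert (sum_n (fun _ : nat => 0) M = 0).
          { rewrite sum_n_const. apply Rmult_0_r. }
          rewrite H. replace (1 + 0 * 0) with 1 by ring.
          apply Rle_trans with (1 + (1 - t) * / t).
          { apply Rplus_le_compat_l. apply Rmult_le_compat_l; lra. }
          apply Rmult_le_reg_l with t; [lra|].
          rewrite Rmult_plus_distr_l.
          replace (t * ((1 - t) * / t)) with (1 - t) by (field; lra).
          rewrite Rinv_r by lra. lra.
        * intros n. rewrite !bern_n0. simpl. ring. }
    apply Hs.
  - induction N as [|N IHN].
    + rewrite sum_O, bern_0S. left. apply Rinv_0_lt_compat; lra.
    + rewrite (sum_rec (fun _ => 0) (fun n => bernstein n k t) (fun n => bernstein n (S k) t) t (1 - t)).
      * rewrite bern_0S.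
        specialize (IH N).
        apply Rle_trans with (0 + t * / t + (1 - t) * / t).
        { apply Rplus_le_compat. apply Rplus_le_compat_l.
          apply Rmult_le_compat_l; lra. apply Rmult_le_compat_l; lra. }
        right. field. lra.
      * intros n. apply bern_rec.
Qed.

Lemma ex_bern (t : R) : 0 < t < 1 -> forall k, ex_series (fun n => bernstein n k t).
Proof.
  intros ht k.
  destruct (ex_finite_lim_seq_incr (sum_n (fun n => bernstein n k t)) (/ t)) as [l Hl].
  - intros n. rewrite sum_Sn. unfold plus; simpl.
    pose proof (bern_nonneg t ht (S n) k). lra.
  - apply partial_bound; auto.
  - exists l. exact Hl.
Qed.

Lemma ex_alt (t : R) : 0 < t < 1 ->
  forall k, ex_series (fun n => (-1) ^ n * bernstein n k t).
Proof.
  intros ht k. apply ex_series_Rabs.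
  apply ex_series_ext with (fun n => bernstein n k t).
  - intros n. rewrite Rabs_mult, pow_1_abs, Rabs_right. symmetry; apply Rmult_1_l.
    apply Rle_ge, bern_nonneg; auto.
  - apply ex_bern; auto.
Qed.

Theorem mainTheorem9 (t : R) (ht : 0 < t < 1) :
  (forall k : nat, ex_series (fun n : nat => (-1) ^ n * bernstein n k t)) /\
  is_lim_seq (fun k : nat => Series (fun n : nat => (-1) ^ n * bernstein n k t)) 0.
Proof.
  split. apply ex_alt; auto.
  set (S0 := Series (fun n : nat => (-1) ^ n * bernstein n 0 t)).
  set (q := - t / (2 - t)).
  assert (Hk : forall k, Series (fun n : nat => (-1) ^ n * bernstein n k t) = q ^ k * S0).
  { intros k. induction k as [|k IH]. simpl. unfold S0. ring.
    set (c := fun n : nat => (-1) ^ n * bernstein n (S k) t).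
    set (b := fun n : nat => (-1) ^ n * bernstein n k t).
    assert (E : Series c = c O + Series (fun n => (-t) * b n + (- (1 - t)) * c n)).
    { rewrite Series_incr_1 by (apply ex_alt; auto). f_equal.
      apply Series_ext. intros n. unfold b, c. rewrite bern_rec. simpl. ring. }
    rewrite Series_plus in E.
    2: { exact (ex_series_scal_l (-t) b (ex_alt t ht k)). }
    2: { exact (ex_series_scal_l (-(1-t)) c (ex_alt t ht (S k))). }
    rewrite !Series_scal_l in E.
    unfold c at 2 in E. rewrite bern_0S in E.
    fold c. unfold b in E. rewrite IH in E.
    simpl. unfold q in *.
    apply Rmult_eq_reg_l with (2 - t); [|lra].
    field_simplify; [|lra]. field_simplify in E. lra. }
  apply is_lim_seq_ext with (fun k => q ^ k * S0).
  - intros k. rewrite Hk. reflexivity.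
  - replace (Finite 0) with (Rbar_mult (Finite 0) (Finite S0)) by (simpl; f_equal; ring).
    apply is_lim_seq_scal_r. apply is_lim_seq_geom.
    unfold q. rewrite Rabs_left1.
    + apply Rmult_lt_reg_r with (2 - t); [lra|]. field_simplify; lra.
    + unfold Rdiv. assert (0 < / (2 - t)) by (apply Rinv_0_lt_compat; lra). nra.
Qed.
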